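(* Let $\sigma:\mathbb{R}\to\mathbb{R}$ be an increasing odd homeomorphism. Then every point of $\mathbb{R}^2$ that does not belong to a $\sigma$-rational line has a dense orbit in $\mathbb{R}^2$ under the action of the group $\Gamma(\sigma)$.
   Context: For an increasing odd homeomorphism $\sigma:\mathbb{R}\to\mathbb{R}$, define the bijections $h_\sigma,v_\sigma:\mathbb{R}^2\to\mathbb{R}^2$ by $h_\sigma(x,y)=(x+\sigma^{-1}(y),y)$ and $v_\sigma(x,y)=(x,\sigma(x)+y)$, and let $\Gamma(\sigma)$ be the group (under composition) generated by $h_\sigma$ and $v_\sigma$. Let $\mathcal M(h_\sigma,v_\sigma)$ denote the monoid (containing the identity) generated by $h_\sigma,v_\sigma$, and $\mathcal M(h_\sigma^{-1},v_\sigma^{-1})$ the monoid generated by $h_\sigma^{-1},v_\sigma^{-1}$. Let $Ox=\mathbb{R}\times\{0\}$ and $Oy=\{0\}\times\mathbb{R}$. The $\sigma$-rational lines are the subsets of $\mathbb{R}^2$ of the form: $Ox$ or $Oy$; $m(Ox)$ with $m\in\mathcal M(h_\sigma,v_\sigma)$; or $m(Oy)$ with $m\in\mathcal M(h_\sigma^{-1},v_\sigma^{-1})$. *)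

(* Defs.v *)
From Stdlib Require Import Reals List.
Open Scope R_scope.

Definition incr_odd_homeo (sigma : R -> R) : Prop :=
  (forall x y, x < y -> sigma x < sigma y) /\
  (forall x, sigma (- x) = - sigma x) /\
  continuity sigma /\
  (forall y, exists x, sigma x = y).

Definition pt := (R * R)%type.

Definition hmap (sinv : R -> R) (p : pt) : pt := (fst p + sinv (snd p), snd p).
Definition vmap (sigma : R -> R) (p : pt) : pt := (fst p, sigma (fst p) + snd p).
Definition hinv (sinv : R -> R) (p : pt) : pt := (fst p - sinv (snd p), snd p).
Definition vinv (sigma : R -> R) (p : pt) : pt := (fst p, snd p - sigma (fst p)).

Inductive gen := Gh | Gv | Ghi | Gvi.

Definition act_gen (sigma sinv : R -> R) (g : gen) : pt -> pt :=
  match g with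
  | Gh => hmap sinv | Gv => vmap sigma
  | Ghi => hinv sinv | Gvi => vinv sigma
  end.

(* a word w = [g1; ...; gk] acts as g1 o ... o gk ; the empty word is the identity *)
Definition act_word (sigma sinv : R -> R) (w : list gen) (p : pt) : pt :=
  fold_right (fun g q => act_gen sigma sinv g q) p w.

Definition in_Gamma (sigma sinv : R -> R) (f : pt -> pt) : Prop :=
  exists w, forall p, f p = act_word sigma sinv w p.

Definition in_M_pos (sigma sinv : R -> R) (f : pt -> pt) : Prop :=
  exists w, Forall (fun g => g = Gh \/ g = Gv) w /\
            forall p, f p = act_word sigma sinv w p.
Definition in_M_neg (sigma sinv : R -> R) (f : pt -> pt) : Prop :=
  exists w, Forall (fun g => g = Ghi \/ g = Gvi) w /\
            forall p, f p = act_word sigma sinv w p.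

Definition Ox (p : pt) : Prop := snd p = 0.
Definition Oy (p : pt) : Prop := fst p = 0.

Definition on_rational_line (sigma sinv : R -> R) (p : pt) : Prop :=
  Ox p \/ Oy p \/
  (exists m, in_M_pos sigma sinv m /\ exists q, Ox q /\ m q = p) \/
  (exists m, in_M_neg sigma sinv m /\ exists q, Oy q /\ m q = p).

Definition dist2 (p q : pt) : R :=
  sqrt ((fst p - fst q)^2 + (snd p - snd q)^2).

Definition dense_orbit (sigma sinv : R -> R) (p : pt) : Prop :=
  forall (q : pt) (eps : R), 0 < eps ->
    exists g, in_Gamma sigma sinv g /\ dist2 (g p) q < eps.

(* Main.v *)
Require Import Defs.
From Stdlib Require Import Reals List.
From Stdlib Require Import Lra Lia Classical.
Open Scope R_scope.

Definition Hyp (sigma sinv : R -> R) : Prop :=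
  incr_odd_homeo sigma /\ (forall x, sinv (sigma x) = x) /\ (forall y, sigma (sinv y) = y).

Definition ctsR (f : R -> R) : Prop :=
  forall x eps, 0 < eps -> exists d, 0 < d /\ forall y, Rabs (y - x) < d -> Rabs (f y - f x) < eps.

Lemma ctsR_continuity f : ctsR f -> continuity f.
Proof.
  intros H x eps Heps. destruct (H x eps Heps) as [d [Hd Hy]].
  exists d; split; [lra|]. intros y [_ Hy']. simpl in *. unfold R_dist in *. now apply Hy.
Qed.

Lemma continuity_ctsR f : continuity f -> ctsR f.
Proof.
  intros H x eps Heps. destruct (H x eps Heps) as [d [Hd Hy]].
  exists d; split; [lra|]. intros y Hy'.
  destruct (Req_dec y x) as [->|Hne].
  - rewrite Rminus_diag, Rabs_R0; lra.
  - apply (Hy y). split; [split; [exact I| congruence] | exact Hy'].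
Qed.

Lemma ctsR_plus f g : ctsR f -> ctsR g -> ctsR (fun t => f t + g t).
Proof.
  intros Hf Hg x eps He.
  destruct (Hf x (eps/2)) as [d1 [H1 K1]]; [lra|].
  destruct (Hg x (eps/2)) as [d2 [H2 K2]]; [lra|].
  exists (Rmin d1 d2); split; [apply Rmin_pos; lra|].
  intros y Hy. assert (A1 := K1 y ltac:(pose proof (Rmin_l d1 d2); lra)).
  assert (A2 := K2 y ltac:(pose proof (Rmin_r d1 d2); lra)).
  replace (f y + g y - (f x + g x)) with ((f y - f x) + (g y - g x)) by ring.
  pose proof (Rabs_triang (f y - f x) (g y - g x)). lra.
Qed.

Lemma ctsR_opp f : ctsR f -> ctsR (fun t => - f t).
Proof.
  intros Hf x eps He. destruct (Hf x eps He) as [d [Hd K]]. exists d; split; auto.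
  intros y Hy. replace (- f y - - f x) with (- (f y - f x)) by ring. rewrite Rabs_Ropp. auto.
Qed.

Lemma ctsR_minus f g : ctsR f -> ctsR g -> ctsR (fun t => f t - g t).
Proof. intros. apply (ctsR_plus f (fun t => - g t)); auto. now apply ctsR_opp. Qed.

Lemma ctsR_comp f g : ctsR f -> ctsR g -> ctsR (fun t => g (f t)).
Proof.
  intros Hf Hg x eps He. destruct (Hg (f x) eps He) as [d1 [H1 K1]].
  destruct (Hf x d1 H1) as [d2 [H2 K2]]. exists d2; split; auto.
Qed.

Lemma ctsR_const c : ctsR (fun _ => c).
Proof. intros x eps He. exists 1; split; [lra|]. intros. rewrite Rminus_diag, Rabs_R0; lra. Qed.

Lemma ctsR_lin a b : ctsR (fun t => a + t * b).
Proof.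
  intros x eps He. exists (eps / (Rabs b + 1)). split.
  - apply Rdiv_lt_0_compat; [lra| pose proof (Rabs_pos b); lra].
  - intros y Hy. replace (a + y * b - (a + x * b)) with ((y - x) * b) by ring.
    rewrite Rabs_mult. pose proof (Rabs_pos b). pose proof (Rabs_pos (y - x)).
    assert (Rabs (y - x) * (Rabs b + 1) < eps).
    { apply Rmult_lt_reg_r with (/ (Rabs b + 1)). apply Rinv_0_lt_compat; lra.
      rewrite Rmult_assoc, Rinv_r by lra. rewrite Rmult_1_r. exact Hy. }
    nra.
Qed.


Lemma s_lt sigma sinv (H : Hyp sigma sinv) x y : x < y -> sigma x < sigma y.
Proof. destruct H as [[H _] _]. auto. Qed.

Lemma s_le sigma sinv (H : Hyp sigma sinv) x y : x <= y -> sigma x <= sigma y.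
Proof. intros [h|h]. left; eapply s_lt; eauto. subst; right; auto. Qed.

Lemma si_lt sigma sinv (H : Hyp sigma sinv) a b : a < b -> sinv a < sinv b.
Proof.
  intros Hab. destruct H as [H0 [H1 H2]].
  destruct (Rlt_le_dec (sinv a) (sinv b)) as [h|h]; auto.
  exfalso. destruct h as [h|h].
  - apply (s_lt sigma sinv (conj H0 (conj H1 H2))) in h. rewrite !H2 in h. lra.
  - assert (sigma (sinv b) = sigma (sinv a)) by (rewrite h; auto). rewrite !H2 in H. lra.
Qed.

Lemma si_le sigma sinv (H : Hyp sigma sinv) a b : a <= b -> sinv a <= sinv b.
Proof. intros [h|h]. left; eapply si_lt; eauto. subst; right; auto. Qed.

Lemma lt_si sigma sinv (H : Hyp sigma sinv) a x : a < sigma x -> sinv a < x.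
Proof. intros h. pose proof (si_lt _ _ H _ _ h). destruct H as [_ [H1 _]]. rewrite H1 in H0. auto. Qed.

Lemma s0 sigma sinv (H : Hyp sigma sinv) : sigma 0 = 0.
Proof. destruct H as [[_ [Ho _]] _]. pose proof (Ho 0). rewrite Ropp_0 in H. lra. Qed.

Lemma s_odd sigma sinv (H : Hyp sigma sinv) x : sigma (- x) = - sigma x.
Proof. destruct H as [[_ [Ho _]] _]. auto. Qed.

Lemma si_odd sigma sinv (H : Hyp sigma sinv) y : sinv (- y) = - sinv y.
Proof.
  pose proof H as [_ [H1 H2]].
  rewrite <- (H2 y) at 1. rewrite <- s_odd with (sinv := sinv) by auto. apply H1.
Qed.

Lemma s_pos sigma sinv (H : Hyp sigma sinv) x : 0 < x -> 0 < sigma x.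
Proof. intros. rewrite <- (s0 _ _ H). eapply s_lt; eauto. Qed.

Lemma si0 sigma sinv (H : Hyp sigma sinv) : sinv 0 = 0.
Proof. pose proof (s0 _ _ H) as E. destruct H as [_ [H2 _]]. rewrite <- E at 1. auto. Qed.

Lemma si_pos sigma sinv (H : Hyp sigma sinv) y : 0 < y -> 0 < sinv y.
Proof. intros. pose proof (si_lt _ _ H 0 y H0). rewrite (si0 _ _ H) in H1. auto. Qed.

Lemma s_cts sigma sinv (H : Hyp sigma sinv) : ctsR sigma.
Proof. destruct H as [[_ [_ [Hc _]]] _]. now apply continuity_ctsR. Qed.

Lemma si_cts sigma sinv (H : Hyp sigma sinv) : ctsR sinv.
Proof.
  intros y0 eps He. pose proof H as [_ [H1 H2]].
  set (x0 := sinv y0).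
  assert (A1 : sigma (x0 - eps) < y0).
  { rewrite <- (H2 y0). apply (s_lt _ _ H). unfold x0; lra. }
  assert (A2 : y0 < sigma (x0 + eps)).
  { rewrite <- (H2 y0) at 1. apply (s_lt _ _ H). unfold x0; lra. }
  exists (Rmin (y0 - sigma (x0 - eps)) (sigma (x0 + eps) - y0)). split.
  - apply Rmin_pos; lra.
  - intros y Hy. pose proof (Rmin_l (y0 - sigma (x0 - eps)) (sigma (x0 + eps) - y0)).
    pose proof (Rmin_r (y0 - sigma (x0 - eps)) (sigma (x0 + eps) - y0)).
    apply Rabs_def2 in Hy. destruct Hy.
    assert (B1 : sinv y < x0 + eps) by (apply (lt_si _ _ H); lra).
    assert (B2 : sinv (sigma (x0 - eps)) < sinv y) by (apply (si_lt _ _ H); lra).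
    rewrite H1 in B2. fold x0. apply Rabs_def1; lra.
Qed.

Definition close (e : R) (P T : pt) : Prop :=
  Rabs (fst P - fst T) < e /\ Rabs (snd P - snd T) < e.

Definition approx sigma sinv (p T : pt) : Prop :=
  forall e, 0 < e -> exists w, close e (act_word sigma sinv w p) T.

Lemma shear_cont (f : R -> R) (Hf : ctsR f) (x0 y0 e : R) : 0 < e ->
  exists d, 0 < d /\ forall x y, Rabs (x - x0) < d -> Rabs (y - y0) < d ->
     Rabs ((x + f y) - (x0 + f y0)) < e.
Proof.
  intros He. destruct (Hf y0 (e/2)) as [d1 [Hd1 K]]; [lra|].
  exists (Rmin (e/2) d1). split; [apply Rmin_pos; lra|].
  intros x y Hx Hy. pose proof (Rmin_l (e/2) d1). pose proof (Rmin_r (e/2) d1).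
  assert (A := K y ltac:(lra)).
  replace (x + f y - (x0 + f y0)) with ((x - x0) + (f y - f y0)) by ring.
  pose proof (Rabs_triang (x - x0) (f y - f y0)). lra.
Qed.

Lemma gen_cont sigma sinv (H : Hyp sigma sinv) g (T : pt) e : 0 < e ->
  exists d, 0 < d /\ forall P, close d P T ->
     close e (act_gen sigma sinv g P) (act_gen sigma sinv g T).
Proof.
  intros He. destruct T as [x0 y0].
  assert (Cs := s_cts _ _ H). assert (Ci := si_cts _ _ H).
  assert (Cmi := ctsR_opp _ Ci). assert (Cms := ctsR_opp _ Cs).
  destruct g; unfold close; cbn [fst snd act_gen hmap vmap hinv vinv].
  - destruct (shear_cont sinv Ci x0 y0 e He) as [d [Hd K]].
    exists (Rmin d e); split; [apply Rmin_pos; lra|]. intros [x y] [A B]; cbn [fst snd act_gen hmap vmap hinv vinv] in *.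
    pose proof (Rmin_l d e). pose proof (Rmin_r d e). split; [apply K; lra| lra].
  - destruct (shear_cont sigma Cs y0 x0 e He) as [d [Hd K]].
    exists (Rmin d e); split; [apply Rmin_pos; lra|]. intros [x y] [A B]; cbn [fst snd act_gen hmap vmap hinv vinv] in *.
    pose proof (Rmin_l d e). pose proof (Rmin_r d e). split; [lra|].
    rewrite (Rplus_comm (sigma x)), (Rplus_comm (sigma x0)). apply K; lra.
  - destruct (shear_cont _ Cmi x0 y0 e He) as [d [Hd K]].
    exists (Rmin d e); split; [apply Rmin_pos; lra|]. intros [x y] [A B]; cbn [fst snd act_gen hmap vmap hinv vinv] in *.
    pose proof (Rmin_l d e). pose proof (Rmin_r d e). split; [apply K; lra| lra].
  - destruct (shear_cont _ Cms y0 x0 e He) as [d [Hd K]].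
    exists (Rmin d e); split; [apply Rmin_pos; lra|]. intros [x y] [A B]; cbn [fst snd act_gen hmap vmap hinv vinv] in *.
    pose proof (Rmin_l d e). pose proof (Rmin_r d e). split; [lra|]. apply K; lra.
Qed.

Lemma approx_gen sigma sinv (H : Hyp sigma sinv) p T g :
  approx sigma sinv p T -> approx sigma sinv p (act_gen sigma sinv g T).
Proof.
  intros A e He. destruct (gen_cont _ _ H g T e He) as [d [Hd K]].
  destruct (A d Hd) as [w Hw]. exists (g :: w). simpl. apply K. exact Hw.
Qed.

Lemma approx_closed sigma sinv p T :
  (forall e, 0 < e -> exists P, approx sigma sinv p P /\ close e P T) ->
  approx sigma sinv p T.
Proof.
  intros A e He. destruct (A (e/2)) as [P [AP [C1 C2]]]; [lra|].
  destruct (AP (e/2)) as [w [D1 D2]]; [lra|]. exists w. split.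
  - replace (fst (act_word sigma sinv w p) - fst T) with
      ((fst (act_word sigma sinv w p) - fst P) + (fst P - fst T)) by ring.
    pose proof (Rabs_triang (fst (act_word sigma sinv w p) - fst P) (fst P - fst T)). lra.
  - replace (snd (act_word sigma sinv w p) - snd T) with
      ((snd (act_word sigma sinv w p) - snd P) + (snd P - snd T)) by ring.
    pose proof (Rabs_triang (snd (act_word sigma sinv w p) - snd P) (snd P - snd T)). lra.
Qed.

Lemma act_word_app sigma sinv w1 w2 q :
  act_word sigma sinv (w1 ++ w2) q = act_word sigma sinv w1 (act_word sigma sinv w2 q).
Proof. unfold act_word. now rewrite fold_right_app. Qed.

Definition Nm (P : pt) : pt := (- fst P, - snd P).

Lemma act_gen_N sigma sinv (H : Hyp sigma sinv) g q :
  act_gen sigma sinv g (Nm q) = Nm (act_gen sigma sinv g q).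
Proof.
  destruct q as [x y]; destruct g; unfold Nm, act_gen, hmap, vmap, hinv, vinv; simpl;
  rewrite ?(si_odd _ _ H), ?(s_odd _ _ H); f_equal; ring.
Qed.

Lemma act_word_N sigma sinv (H : Hyp sigma sinv) w q :
  act_word sigma sinv w (Nm q) = Nm (act_word sigma sinv w q).
Proof.
  induction w; simpl; auto. rewrite IHw. apply act_gen_N; auto.
Qed.

Lemma nat_floor t : 0 <= t -> exists n : nat, INR n <= t < INR n + 1.
Proof.
  intros Ht. destruct (INR_archimed 1 t) as [N HN]; [lra|]. rewrite Rmult_1_r in HN.
  revert HN. induction N; intros HN.
  - simpl in HN. lra.
  - destruct (Rle_lt_dec (INR N) t) as [h|h].
    + exists N. rewrite S_INR in HN. lra.
    + apply IHN; lra.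
Qed.

Lemma run_lemma (z w : nat -> R) (B : nat -> Prop) :
  (forall k, 0 < z k) -> (forall k, 0 < w k) ->
  (forall k, ~ B k -> z (S k) <= z k - w k /\ w (S k) = w k) ->
  forall j, exists j', (j <= j')%nat /\ B j'.
Proof.
  intros Hz Hw Hs j. apply NNPP. intro Hn.
  assert (Hall : forall k, (j <= k)%nat -> ~ B k).
  { intros k Hk HB. apply Hn. exists k. auto. }
  assert (Ind : forall n, z (j + n)%nat <= z j - INR n * w j /\ w (j + n)%nat = w j).
  { induction n.
    - rewrite Nat.add_0_r. rewrite Rmult_0_l. split; [rewrite Rminus_0_r; right; reflexivity|reflexivity].
    - destruct IHn as [I1 I2]. replace (j + S n)%nat with (S (j + n)) by lia.
      destruct (Hs (j + n)%nat (Hall (j + n)%nat ltac:(lia))) as [A1 A2].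
      rewrite S_INR. split; [|congruence]. rewrite I2 in A1. lra. }
  destruct (INR_archimed (w j) (z j) (Hw j)) as [n Hn'].
  destruct (Ind n) as [I1 _]. pose proof (Hz (j + n)%nat). lra.
Qed.

Lemma decr_lemma (a : nat -> R) (B : nat -> Prop) (c : R) :
  0 < c -> (forall k, 0 < a k) -> (forall k, a (S k) <= a k) ->
  (forall k, B k -> a (S k) <= a k - c) ->
  (forall j, exists j', (j <= j')%nat /\ B j') -> False.
Proof.
  intros Hc Ha Hm Hb Hinf.
  assert (Mono : forall k n, a (k + n)%nat <= a k).
  { intros k n; induction n. rewrite Nat.add_0_r; lra.
    replace (k + S n)%nat with (S (k + n)) by lia. pose proof (Hm (k + n)%nat). lra. }
  assert (Ind : forall N, exists j, a j <= a 0%nat - INR N * c).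
  { induction N.
    - exists 0%nat. simpl INR. lra.
    - destruct IHN as [j Hj]. destruct (Hinf j) as [j' [Hjj' HB]].
      exists (S j'). rewrite S_INR. pose proof (Hb j' HB).
      replace j' with (j + (j' - j))%nat in * by lia. pose proof (Mono j (j' - j)%nat). lra. }
  destruct (INR_archimed c (a 0%nat) Hc) as [N HN]. destruct (Ind N) as [j Hj].
  pose proof (Ha j). lra.
Qed.

Definition Dstep sigma sinv (P : pt) : pt :=
  if Rlt_dec (snd P) (sigma (fst P)) then hinv sinv P else vinv sigma P.

Fixpoint Tseq sigma sinv (T : pt) (n : nat) : pt :=
  match n with O => T | S n => Dstep sigma sinv (Tseq sigma sinv T n) end.

Fixpoint Fm sigma sinv (T : pt) (n : nat) (R0 : pt) : pt :=
  match n with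
  | O => R0
  | S n => if Rlt_dec (snd (Tseq sigma sinv T n)) (sigma (fst (Tseq sigma sinv T n)))
           then hinv sinv (Fm sigma sinv T n R0) else vinv sigma (Fm sigma sinv T n R0)
  end.

Lemma Fm_T sigma sinv T n : Fm sigma sinv T n T = Tseq sigma sinv T n.
Proof.
  induction n; simpl; auto. rewrite IHn. unfold Dstep. reflexivity.
Qed.

Lemma hmap_hinv sinv X : hmap sinv (hinv sinv X) = X.
Proof. destruct X; unfold hmap, hinv; simpl; f_equal; ring. Qed.
Lemma vmap_vinv sigma X : vmap sigma (vinv sigma X) = X.
Proof. destruct X; unfold vmap, vinv; simpl; f_equal; ring. Qed.

Definition Pt (e : R) (T : pt) (t : R) : pt := (fst T + t * e, snd T).

Lemma Fm_cts sigma sinv (H : Hyp sigma sinv) T e n :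
  ctsR (fun t => fst (Fm sigma sinv T n (Pt e T t))) /\
  ctsR (fun t => snd (Fm sigma sinv T n (Pt e T t))).
Proof.
  induction n.
  - simpl. split; [apply ctsR_lin| apply ctsR_const].
  - destruct IHn as [I1 I2]. simpl.
    destruct (Rlt_dec _ _); unfold hinv, vinv; simpl; split; auto.
    + apply (ctsR_minus _ _ I1). apply (ctsR_comp _ _ I2). apply (si_cts _ _ H).
    + apply (ctsR_minus _ _ I2). apply (ctsR_comp _ _ I1). apply (s_cts _ _ H).
Qed.

Lemma lemmaK sigma sinv (H : Hyp sigma sinv) (A : pt -> Prop)
  (HOx : forall x, A (x, 0))
  (Hh : forall P, A P -> A (hmap sinv P))
  (Hv : forall P, A P -> A (vmap sigma P))
  (Hcl : forall T, (forall e, 0 < e -> exists P, A P /\ close e P T) -> A T)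
  (T : pt) : 0 < fst T -> 0 < snd T -> A T.
Proof.
  intros HT1 HT2. apply NNPP; intro nA.
  assert (Hex : exists e, 0 < e /\ forall P, A P -> ~ close e P T).
  { apply NNPP; intro C; apply nA; apply Hcl; intros e He. apply NNPP; intro C2.
    apply C. exists e; split; auto. intros P AP Cl. apply C2. exists P; auto. }
  destruct Hex as [eps [Heps Hfar]].
  set (e := eps / 2). assert (He : 0 < e) by (unfold e; lra).
  assert (Back : forall n R0, A (Fm sigma sinv T n R0) -> A R0).
  { induction n; intros R0 HA; simpl in HA; auto. apply IHn.
    destruct (Rlt_dec _ _).
    - rewrite <- (hmap_hinv sinv (Fm sigma sinv T n R0)). apply Hh. exact HA.
    - rewrite <- (vmap_vinv sigma (Fm sigma sinv T n R0)). apply Hv. exact HA. }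
  assert (NoTie : forall n, snd (Tseq sigma sinv T n) <> sigma (fst (Tseq sigma sinv T n))).
  { intros n Eq. apply nA. apply (Back n). rewrite Fm_T.
    replace (Tseq sigma sinv T n) with (vmap sigma (fst (Tseq sigma sinv T n), 0)).
    - apply Hv, HOx.
    - unfold vmap; simpl. rewrite <- Eq. destruct (Tseq sigma sinv T n); simpl in *. f_equal; ring. }
  set (S0 := Pt e T 1).
  assert (E0 : Pt e T 0 = T).
  { unfold Pt. rewrite Rmult_0_l, Rplus_0_r. destruct T; reflexivity. }
  assert (Ivt : forall n, sigma (fst (Tseq sigma sinv T n)) < snd (Tseq sigma sinv T n) ->
                 snd (Fm sigma sinv T n S0) <= sigma (fst (Fm sigma sinv T n S0)) -> False).
  { intros n Hlt Hle.
    set (psi := fun t => sigma (fst (Fm sigma sinv T n (Pt e T t))) - snd (Fm sigma sinv T n (Pt e T t))).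
    assert (Hz : forall t, 0 <= t <= 1 -> psi t = 0 -> False).
    { intros t Ht Hpsi. apply (Hfar (Pt e T t)).
      - apply (Back n). replace (Fm sigma sinv T n (Pt e T t)) with
          (vmap sigma (fst (Fm sigma sinv T n (Pt e T t)), 0)).
        + apply Hv, HOx.
        + unfold psi in Hpsi. unfold vmap; simpl.
          destruct (Fm sigma sinv T n (Pt e T t)); simpl in *. f_equal; lra.
      - unfold close, Pt; simpl. replace (fst T + t * e - fst T) with (t * e) by ring.
        rewrite Rminus_diag, Rabs_R0. rewrite Rabs_right by nra. split; [|lra].
        unfold e. nra. }
    destruct (Fm_cts sigma sinv H T e n) as [C1 C2].
    assert (Cp : ctsR psi).
    { apply ctsR_minus; auto. apply (ctsR_comp _ _ C1 (s_cts _ _ H)). }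
    assert (P0 : psi 0 < 0). { unfold psi. rewrite E0, Fm_T. lra. }
    destruct Hle as [Hlt1 | Heq1].
    - destruct (IVT psi 0 1 (ctsR_continuity _ Cp) ltac:(lra) P0 ltac:(unfold psi; fold S0; lra))
        as [z [Hz1 Hz2]].
      exact (Hz z Hz1 Hz2).
    - apply (Hz 1); [lra|]. unfold psi. fold S0. lra. }
  set (Tn := fun n => Tseq sigma sinv T n).
  set (Sn := fun n => Fm sigma sinv T n S0).
  assert (Inv : forall n, 0 < fst (Tn n) /\ 0 < snd (Tn n) /\ 0 < fst (Sn n) /\ 0 < snd (Sn n)
                 /\ fst (Tn n) + e <= fst (Sn n) /\ snd (Sn n) <= snd (Tn n)).
  { induction n.
    - unfold Tn, Sn, S0, Pt; simpl. repeat split; try lra.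
    - destruct IHn as [I1 [I2 [I3 [I4 [I5 I6]]]]]. unfold Tn, Sn in *. simpl. unfold Dstep.
      destruct (Rlt_dec _ _) as [h|h]; unfold hinv, vinv; simpl.
      + assert (sinv (snd (Tseq sigma sinv T n)) < fst (Tseq sigma sinv T n)) by (apply (lt_si _ _ H); auto).
        assert (sigma (fst (Tseq sigma sinv T n)) < sigma (fst (Fm sigma sinv T n S0))) by (apply (s_lt _ _ H); lra).
        assert (sinv (snd (Fm sigma sinv T n S0)) < fst (Fm sigma sinv T n S0)) by (apply (lt_si _ _ H); lra).
        assert (sinv (snd (Fm sigma sinv T n S0)) <= sinv (snd (Tseq sigma sinv T n))) by (apply (si_le _ _ H); lra).
        repeat split; lra.
      + assert (h' : sigma (fst (Tseq sigma sinv T n)) < snd (Tseq sigma sinv T n)).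
        { pose proof (NoTie n). apply Rnot_lt_le in h. destruct h; [auto| congruence]. }
        destruct (Rle_lt_dec (snd (Fm sigma sinv T n S0)) (sigma (fst (Fm sigma sinv T n S0)))) as [k|k].
        { exfalso. exact (Ivt n h' k). }
        assert (sigma (fst (Tseq sigma sinv T n)) <= sigma (fst (Fm sigma sinv T n S0))) by (apply (s_le _ _ H); lra).
        repeat split; lra. }
  set (B := fun n => ~ (snd (Tn n) < sigma (fst (Tn n)))).
  assert (Inf : forall j, exists j', (j <= j')%nat /\ B j').
  { apply (run_lemma (fun n => fst (Tn n)) (fun n => sinv (snd (Tn n)))).
    - intros k; apply (Inv k).
    - intros k; apply (si_pos _ _ H); apply (Inv k).
    - intros k Hk. unfold B in Hk. apply NNPP in Hk. unfold Tn in *. simpl. unfold Dstep.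
      destruct (Rlt_dec _ _) as [h|h]; [|contradiction]. unfold hinv; simpl. split; lra. }
  apply (decr_lemma (fun n => snd (Sn n)) B (sigma e)).
  - apply (s_pos _ _ H); auto.
  - intros k; apply (Inv k).
  - intros k. unfold Sn; simpl. destruct (Rlt_dec _ _); unfold hinv, vinv; simpl; [lra|].
    pose proof (Inv k) as [_ [_ [I3 _]]]. pose proof (s_pos _ _ H _ I3). unfold Sn in *. lra.
  - intros k Hk. unfold B in Hk. unfold Sn; simpl. destruct (Rlt_dec _ _) as [h|h]; [unfold Tn in Hk; contradiction|].
    unfold vinv; simpl. pose proof (Inv k) as [I1 [_ [_ [_ [I5 _]]]]].
    assert (sigma e <= sigma (fst (Fm sigma sinv T k S0))) by (apply (s_le _ _ H); unfold Sn in *; lra).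
    lra.
  - exact Inf.
Qed.

Definition Es (s : bool) (P : pt) : pt := if s then P else (- fst P, snd P).
Definition Hs (s : bool) := if s then Ghi else Gh.
Definition Vs (s : bool) := if s then Gvi else Gv.
Definition Hs' (s : bool) := if s then Gh else Ghi.
Definition Vs' (s : bool) := if s then Gv else Gvi.

Fixpoint dw sigma sinv s P0 n : list gen :=
  match n with
  | O => nil
  | S n => (if Rlt_dec (snd (Tseq sigma sinv P0 n)) (sigma (fst (Tseq sigma sinv P0 n)))
            then Hs s else Vs s) :: dw sigma sinv s P0 n
  end.

Fixpoint aw sigma sinv s P0 n : list gen :=
  match n with
  | O => nil
  | S n => aw sigma sinv s P0 n ++
           ((if Rlt_dec (snd (Tseq sigma sinv P0 n)) (sigma (fst (Tseq sigma sinv P0 n)))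
            then Hs' s else Vs' s) :: nil)
  end.

Lemma Es_snd s P : snd (Es s P) = snd P.
Proof. destruct s; reflexivity. Qed.

Lemma gen_Hs sigma sinv (H : Hyp sigma sinv) s Q :
  act_gen sigma sinv (Hs s) (Es s Q) = Es s (hinv sinv Q).
Proof. destruct s, Q; unfold Es, Hs, act_gen, hmap, hinv; simpl; f_equal; ring. Qed.
Lemma gen_Vs sigma sinv (H : Hyp sigma sinv) s Q :
  act_gen sigma sinv (Vs s) (Es s Q) = Es s (vinv sigma Q).
Proof. destruct s, Q; unfold Es, Vs, act_gen, vmap, vinv; simpl; rewrite ?(s_odd _ _ H); f_equal; ring. Qed.
Lemma gen_Hs' sigma sinv (H : Hyp sigma sinv) s Q :
  act_gen sigma sinv (Hs' s) (Es s (hinv sinv Q)) = Es s Q.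
Proof. destruct s, Q; unfold Es, Hs', act_gen, hmap, hinv; simpl; f_equal; ring. Qed.
Lemma gen_Vs' sigma sinv (H : Hyp sigma sinv) s Q :
  act_gen sigma sinv (Vs' s) (Es s (vinv sigma Q)) = Es s Q.
Proof. destruct s, Q; unfold Es, Vs', act_gen, vmap, vinv; simpl; rewrite ?(s_odd _ _ H); f_equal; ring. Qed.

Lemma dw_spec sigma sinv (H : Hyp sigma sinv) s P0 n :
  act_word sigma sinv (dw sigma sinv s P0 n) (Es s P0) = Es s (Tseq sigma sinv P0 n).
Proof.
  induction n; simpl; auto. rewrite IHn. unfold Dstep.
  destruct (Rlt_dec _ _); [apply gen_Hs | apply gen_Vs]; auto.
Qed.

Lemma aw_spec sigma sinv (H : Hyp sigma sinv) s P0 n :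
  act_word sigma sinv (aw sigma sinv s P0 n) (Es s (Tseq sigma sinv P0 n)) = Es s P0.
Proof.
  induction n; simpl; auto. rewrite act_word_app. unfold Dstep.
  destruct (Rlt_dec _ _); simpl.
  - rewrite gen_Hs'; auto.
  - rewrite gen_Vs'; auto.
Qed.

Lemma aw_sign sigma sinv (s : bool) P0 n :
  Forall (fun g => if s then (g = Gh \/ g = Gv) else (g = Ghi \/ g = Gvi)) (aw sigma sinv s P0 n).
Proof.
  induction n; simpl; auto. apply Forall_app; split; auto. constructor; auto.
  destruct (Rlt_dec _ _); destruct s; simpl; auto.
Qed.

Lemma tie_rational sigma sinv (H : Hyp sigma sinv) s P0 n :
  snd (Tseq sigma sinv P0 n) = sigma (fst (Tseq sigma sinv P0 n)) ->
  on_rational_line sigma sinv (Es s P0).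
Proof.
  intros Eq. set (Q := Tseq sigma sinv P0 n) in *.
  rewrite <- (aw_spec sigma sinv H s P0 n). fold Q.
  pose proof (aw_sign sigma sinv s P0 n) as Sg.
  destruct s.
  - right; right; left.
    exists (act_word sigma sinv (aw sigma sinv true P0 n ++ Gv :: nil)). split.
    + exists (aw sigma sinv true P0 n ++ Gv :: nil). split; auto.
      apply Forall_app; split; auto.
    + exists (fst Q, 0). split; [reflexivity|]. rewrite act_word_app. f_equal.
      simpl. unfold vmap; simpl. rewrite <- Eq. destruct Q; simpl; f_equal; ring.
  - right; right; right.
    exists (act_word sigma sinv (aw sigma sinv false P0 n ++ Ghi :: nil)). split.
    + exists (aw sigma sinv false P0 n ++ Ghi :: nil). split; auto.
      apply Forall_app; split; auto.
    + exists (0, sigma (fst Q)). split; [reflexivity|]. rewrite act_word_app. f_equal.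
      simpl. unfold hinv; simpl. pose proof H as [_ [H1 _]]. rewrite H1, <- Eq.
      destruct Q; simpl; f_equal; ring.
Qed.

Lemma step1_core sigma sinv (H : Hyp sigma sinv) s P0 :
  0 < fst P0 -> 0 < snd P0 -> ~ on_rational_line sigma sinv (Es s P0) ->
  forall eta, 0 < eta -> exists w, 0 < snd (act_word sigma sinv w (Es s P0)) < eta.
Proof.
  intros H1 H2 NR eta Heta.
  assert (NoTie : forall n, snd (Tseq sigma sinv P0 n) <> sigma (fst (Tseq sigma sinv P0 n))).
  { intros n Eq. apply NR. eapply tie_rational; eauto. }
  assert (Pos : forall n, 0 < fst (Tseq sigma sinv P0 n) /\ 0 < snd (Tseq sigma sinv P0 n)).
  { induction n; simpl; auto. destruct IHn as [I1 I2]. unfold Dstep.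
    destruct (Rlt_dec _ _) as [h|h]; unfold hinv, vinv; simpl.
    - pose proof (lt_si _ _ H _ _ h). split; lra.
    - pose proof (NoTie n). apply Rnot_lt_le in h. destruct h; [|congruence]. split; lra. }
  assert (Ex : exists j, snd (Tseq sigma sinv P0 j) < eta).
  { apply NNPP; intro C.
    assert (Ge : forall j, eta <= snd (Tseq sigma sinv P0 j)).
    { intros j. apply Rnot_lt_le. intro h. apply C. exists j; auto. }
    set (B := fun n => snd (Tseq sigma sinv P0 n) < sigma (fst (Tseq sigma sinv P0 n))).
    assert (Inf : forall j, exists j', (j <= j')%nat /\ B j').
    { apply (run_lemma (fun n => snd (Tseq sigma sinv P0 n)) (fun n => sigma (fst (Tseq sigma sinv P0 n)))).
      - intros k; apply (Pos k).
      - intros k; apply (s_pos _ _ H); apply (Pos k).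
      - intros k Hk. unfold B in Hk. simpl. unfold Dstep.
        destruct (Rlt_dec _ _) as [h|h]; [contradiction|]. unfold vinv; simpl. split; lra. }
    apply (decr_lemma (fun n => fst (Tseq sigma sinv P0 n)) B (sinv eta)).
    - apply (si_pos _ _ H); auto.
    - intros k; apply (Pos k).
    - intros k. simpl. unfold Dstep. destruct (Rlt_dec _ _); unfold hinv, vinv; simpl; [|lra].
      pose proof (si_pos _ _ H _ (proj2 (Pos k))). lra.
    - intros k Hk. unfold B in Hk. simpl. unfold Dstep. destruct (Rlt_dec _ _) as [h|h]; [|contradiction].
      unfold hinv; simpl. pose proof (si_le _ _ H _ _ (Ge k)). lra.
    - exact Inf. }
  destruct Ex as [j Hj]. exists (dw sigma sinv s P0 j). rewrite dw_spec by auto.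
  rewrite Es_snd. split; [apply (Pos j)| auto].
Qed.

Lemma rational_N sigma sinv (H : Hyp sigma sinv) p :
  on_rational_line sigma sinv (Nm p) -> on_rational_line sigma sinv p.
Proof.
  intros [Hx | [Hy | [[m [[w [Fw Hm]] [q [Hq Eq]]]] | [m [[w [Fw Hm]] [q [Hq Eq]]]]]]].
  - left. unfold Ox, Nm in *; simpl in *. lra.
  - right; left. unfold Oy, Nm in *; simpl in *. lra.
  - right; right; left. exists (act_word sigma sinv w). split.
    + exists w; split; auto.
    + exists (Nm q). split. { unfold Ox, Nm in *; simpl. rewrite Hq. ring. }
      rewrite act_word_N by auto. rewrite <- Hm, Eq. destruct p; unfold Nm; simpl; f_equal; ring.
  - right; right; right. exists (act_word sigma sinv w). split.
    + exists w; split; auto.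
    + exists (Nm q). split. { unfold Oy, Nm in *; simpl. rewrite Hq. ring. }
      rewrite act_word_N by auto. rewrite <- Hm, Eq. destruct p; unfold Nm; simpl; f_equal; ring.
Qed.

Lemma step1_pos sigma sinv (H : Hyp sigma sinv) p :
  ~ on_rational_line sigma sinv p -> 0 < snd p ->
  forall eta, 0 < eta -> exists w, 0 < snd (act_word sigma sinv w p) < eta.
Proof.
  intros NR Hy eta He. destruct p as [x y]; simpl in Hy.
  destruct (Rtotal_order x 0) as [h|[h|h]].
  - replace (x, y) with (Es false (- x, y)) in * by (unfold Es; simpl; f_equal; ring).
    apply step1_core; simpl; auto; lra.
  - exfalso. apply NR. right; left. unfold Oy; simpl; auto.
  - replace (x, y) with (Es true (x, y)) in * by reflexivity.
    apply step1_core; simpl; auto.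
Qed.

Lemma step1 sigma sinv (H : Hyp sigma sinv) p :
  ~ on_rational_line sigma sinv p ->
  forall eta, 0 < eta -> exists w, 0 < Rabs (snd (act_word sigma sinv w p)) < eta.
Proof.
  intros NR eta He.
  destruct (Rtotal_order (snd p) 0) as [h|[h|h]].
  - assert (NR' : ~ on_rational_line sigma sinv (Nm p)) by (intro C; apply NR; eapply rational_N; eauto).
    destruct (step1_pos sigma sinv H (Nm p) NR' ltac:(unfold Nm; simpl; lra) eta He) as [w Hw].
    exists w. rewrite act_word_N in Hw by auto. unfold Nm in Hw; simpl in Hw.
    rewrite Rabs_left by lra. lra.
  - exfalso. apply NR. left. exact h.
  - destruct (step1_pos sigma sinv H p NR h eta He) as [w Hw]. exists w.
    rewrite Rabs_right by lra. lra.
Qed.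

Lemma act_word_cons sigma sinv g w q :
  act_word sigma sinv (g :: w) q = act_gen sigma sinv g (act_word sigma sinv w q).
Proof. reflexivity. Qed.

Lemma repeat_Gh sigma sinv n q :
  act_word sigma sinv (repeat Gh n) q = (fst q + INR n * sinv (snd q), snd q).
Proof.
  induction n.
  - destruct q; simpl; f_equal; ring.
  - replace (repeat Gh (S n)) with (Gh :: repeat Gh n) by reflexivity.
    rewrite act_word_cons.
    rewrite IHn. unfold act_gen, hmap; cbn [fst snd]. rewrite S_INR. f_equal; ring.
Qed.

Lemma repeat_Ghi sigma sinv n q :
  act_word sigma sinv (repeat Ghi n) q = (fst q - INR n * sinv (snd q), snd q).
Proof.
  induction n.
  - destruct q; simpl; f_equal; ring.
  - replace (repeat Ghi (S n)) with (Ghi :: repeat Ghi n) by reflexivity.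
    rewrite act_word_cons.
    rewrite IHn. unfold act_gen, hinv; cbn [fst snd]. rewrite S_INR. f_equal; ring.
Qed.

Lemma OxA sigma sinv (H : Hyp sigma sinv) p :
  ~ on_rational_line sigma sinv p -> forall X, approx sigma sinv p (X, 0).
Proof.
  intros NR X e He.
  assert (Hse : 0 < sigma e) by (apply (s_pos _ _ H); auto).
  destruct (step1 sigma sinv H p NR (Rmin e (sigma e)) ltac:(apply Rmin_pos; lra)) as [w [Hb1 Hb2]].
  set (q := act_word sigma sinv w p) in *.
  set (a := fst q). set (b := snd q).
  pose proof (Rmin_l e (sigma e)). pose proof (Rmin_r e (sigma e)).
  set (d := sinv b).
  assert (Hd1 : d < e).
  { unfold d. pose proof H as [_ [K1 _]]. rewrite <- (K1 e). apply (si_lt _ _ H).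
    pose proof (Rle_abs b). fold b in Hb2. lra. }
  assert (Hd2 : - e < d).
  { unfold d. pose proof H as [_ [K1 _]]. rewrite <- (K1 (- e)). apply (si_lt _ _ H).
    rewrite (s_odd _ _ H). pose proof (Rle_abs (- b)) as Q3. rewrite Rabs_Ropp in Q3. fold b in Hb2. lra. }
  assert (Hd0 : d <> 0).
  { intro E. unfold d in E. pose proof H as [_ [_ K2]]. pose proof (K2 b) as Q3. rewrite E, (s0 _ _ H) in Q3.
    fold b in Hb1. rewrite <- Q3, Rabs_R0 in Hb1. lra. }
  assert (Hb : Rabs (b - 0) < e) by (rewrite Rminus_0_r; fold b in Hb2; lra).
  set (t := (X - a) / d).
  assert (Et : X - a = t * d) by (unfold t; field; auto).
  assert (Hda : Rabs d < e) by (apply Rabs_def1; lra).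
  destruct (Rle_lt_dec 0 t) as [ht|ht].
  - destruct (nat_floor t ht) as [n Hn].
    exists (repeat Gh n ++ w). rewrite act_word_app. fold q. rewrite repeat_Gh. fold a b. fold d.
    unfold close; simpl. split; auto.
    replace (a + INR n * d - X) with ((INR n - t) * d) by lra.
    rewrite Rabs_mult. assert (Rabs (INR n - t) < 1) by (apply Rabs_def1; lra).
    pose proof (Rabs_pos (INR n - t)). pose proof (Rabs_pos d). nra.
  - destruct (nat_floor (- t) ltac:(lra)) as [n Hn].
    exists (repeat Ghi n ++ w). rewrite act_word_app. fold q. rewrite repeat_Ghi. fold a b. fold d.
    unfold close; simpl. split; auto.
    replace (a - INR n * d - X) with (- (INR n + t) * d) by lra.
    rewrite Rabs_mult. assert (Rabs (- (INR n + t)) < 1) by (apply Rabs_def1; lra).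
    pose proof (Rabs_pos (- (INR n + t))). pose proof (Rabs_pos d). nra.
Qed.

Lemma transfer sigma sinv (H : Hyp sigma sinv) p (phi : pt -> pt) g1 g2 :
  (forall x, exists x', phi (x, 0) = (x', 0)) ->
  (forall P, phi (hmap sinv P) = act_gen sigma sinv g1 (phi P)) ->
  (forall P, phi (vmap sigma P) = act_gen sigma sinv g2 (phi P)) ->
  (forall P T e, close e P T -> close e (phi P) (phi T)) ->
  (forall X, approx sigma sinv p (X, 0)) ->
  forall P, 0 < fst P -> 0 < snd P -> approx sigma sinv p (phi P).
Proof.
  intros HO H1 H2 Hc HA.
  apply (lemmaK sigma sinv H (fun P => approx sigma sinv p (phi P))).
  - intros x. destruct (HO x) as [x' ->]. auto.
  - intros P AP. rewrite H1. apply approx_gen; auto.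
  - intros P AP. rewrite H2. apply approx_gen; auto.
  - intros T HT. apply approx_closed. intros e He. destruct (HT e He) as [P [AP CP]].
    exists (phi P). split; auto.
Qed.

Lemma all_approx sigma sinv (H : Hyp sigma sinv) p :
  ~ on_rational_line sigma sinv p -> forall T, approx sigma sinv p T.
Proof.
  intros NR [X Y].
  pose proof (OxA sigma sinv H p NR) as HA.
  destruct (Rtotal_order Y 0) as [hy|[hy|hy]]; [| subst; apply HA |];
  destruct (Rtotal_order X 0) as [hx|[hx|hx]].
  - (* X<0, Y<0 *)
    replace (X, Y) with (Nm (- X, - Y)) by (unfold Nm; simpl; f_equal; ring).
    apply (transfer sigma sinv H p Nm Gh Gv); simpl; try lra; auto.
    + intros x. exists (- x). unfold Nm; simpl. f_equal; ring.
    + intros P. symmetry. exact (act_gen_N sigma sinv H Gh P).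
    + intros P. symmetry. exact (act_gen_N sigma sinv H Gv P).
    + intros P T e [C1 C2]. unfold close, Nm; simpl.
      replace (- fst P - - fst T) with (- (fst P - fst T)) by ring.
      replace (- snd P - - snd T) with (- (snd P - snd T)) by ring.
      rewrite !Rabs_Ropp. auto.
  - (* X = 0 *)
    subst. replace (0, Y) with (act_gen sigma sinv Ghi (act_gen sigma sinv Gv (sinv Y, 0))).
    + apply approx_gen; auto. apply approx_gen; auto.
    + pose proof H as [_ [_ H2]]. simpl. unfold vmap, hinv; simpl. rewrite H2, Rplus_0_r. f_equal; ring.
  - (* X>0, Y<0 *)
    set (r := fun P : pt => (fst P, - snd P)).
    replace (X, Y) with (r (X, - Y)) by (unfold r; simpl; f_equal; ring).
    apply (transfer sigma sinv H p r Ghi Gvi); simpl; try lra; auto.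
    + intros x. exists x. unfold r; simpl. f_equal; ring.
    + intros [x y]. unfold r, hmap, hinv; simpl. rewrite (si_odd _ _ H). f_equal; ring.
    + intros [x y]. unfold r, vmap, vinv; simpl. f_equal; ring.
    + intros P T e [C1 C2]. unfold close, r; simpl. split; auto.
      replace (- snd P - - snd T) with (- (snd P - snd T)) by ring. rewrite Rabs_Ropp. auto.
  - (* X<0, Y>0 *)
    set (l := fun P : pt => (- fst P, snd P)).
    replace (X, Y) with (l (- X, Y)) by (unfold l; simpl; f_equal; ring).
    apply (transfer sigma sinv H p l Ghi Gvi); simpl; try lra; auto.
    + intros x. exists (- x). unfold l; simpl. f_equal; ring.
    + intros [x y]. unfold l, hmap, hinv; simpl. f_equal; ring.
    + intros [x y]. unfold l, vmap, vinv; simpl. rewrite (s_odd _ _ H). f_equal; ring.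
    + intros P T e [C1 C2]. unfold close, l; simpl. split; auto.
      replace (- fst P - - fst T) with (- (fst P - fst T)) by ring. rewrite Rabs_Ropp. auto.
  - (* X = 0, Y > 0 *)
    subst. replace (0, Y) with (act_gen sigma sinv Ghi (act_gen sigma sinv Gv (sinv Y, 0))).
    + apply approx_gen; auto. apply approx_gen; auto.
    + pose proof H as [_ [_ H2]]. simpl. unfold vmap, hinv; simpl. rewrite H2, Rplus_0_r. f_equal; ring.
  - (* X>0, Y>0 *)
    apply (transfer sigma sinv H p (fun P => P) Gh Gv); simpl; auto.
    intros x; exists x; auto.
Qed.

Theorem theorem1 (sigma sinv : R -> R) :
  incr_odd_homeo sigma ->
  (forall x, sinv (sigma x) = x) ->
  (forall y, sigma (sinv y) = y) ->
  forall p : pt, ~ on_rational_line sigma sinv p -> dense_orbit sigma sinv p.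
Proof.
  intros H0 H1 H2 p NR q eps He.
  assert (H : Hyp sigma sinv) by (split; [|split]; auto).
  destruct (all_approx sigma sinv H p NR q (eps / 2) ltac:(lra)) as [w [C1 C2]].
  exists (act_word sigma sinv w). split.
  - exists w. intros; reflexivity.
  - unfold dist2. set (a := fst (act_word sigma sinv w p) - fst q) in *.
    set (b := snd (act_word sigma sinv w p) - snd q) in *.
    rewrite <- (sqrt_pow2 eps) by lra. apply sqrt_lt_1_alt. split.
    + pose proof (pow2_ge_0 a). pose proof (pow2_ge_0 b). lra.
    + rewrite <- (pow2_abs a), <- (pow2_abs b).
      pose proof (Rabs_pos a). pose proof (Rabs_pos b). nra.
Qed.
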